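(* Let $X$ be a Banach space, $D\subset X$ closed, bounded and convex, and $\tau$ a locally convex topology on $D$ containing the relative weak topology of $D$. Let $C$ be a convex subset of $D$, $\varepsilon>0$, $n,k\in\mathbb{N}$ and $\{x_1,\dots,x_k\}\subset X$. If $(\widetilde O_i)_{i=1}^n$ are nonempty sets in $\tau|_C$, then there is another $n$-tuple $(O_i)_{i=1}^n$ of nonempty $\tau|_C$-open sets with $O_i\subset\widetilde O_i$ such that $$\operatorname{diam}\Big(\sum_{i=1}^n\lambda(i)O_i\Big)\le 2\,d\Big(\{x_1,\dots,x_k\},\sum_{i=1}^n\lambda(i)O_i\Big)+\varepsilon\quad\text{for all }\lambda\in S^+_{\ell_1^n}.$$
   Context: $\tau|_C$ is the topology induced by $\tau$ on $C$; locally convex means having a basis of convex open sets. $S^+_{\ell_1^n}=\{\lambda\in\mathbb{R}^n:\lambda(i)\ge0,\ \sum_i\lambda(i)=1\}$. Sums of sets are Minkowski sums and $d(A,B)=\inf\{\|a-b\|:a\in A,b\in B\}$. *)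

(* Defs.v *)
From HB Require Import structures.
From mathcomp Require Import all_boot all_order all_algebra.
From mathcomp Require Import all_classical all_reals all_analysis.
Set Implicit Arguments. Unset Strict Implicit. Unset Printing Implicit Defensive.
Import Order.TTheory GRing.Theory Num.Theory.
Import numFieldNormedType.Exports.
Local Open Scope classical_set_scope.
Local Open Scope ring_scope.

Section Defs.
Context {R : realType} {X : normedModType R}.

Definition cvx (A : set X) : Prop :=
  forall x y (t : R), A x -> A y -> 0 <= t <= 1 -> A (t *: x + (1 - t) *: y).

Definition nbounded (A : set X) : Prop :=
  exists M : R, forall x, A x -> `|x| <= M.

Definition cont_lin_functional (f : X -> R) : Prop :=
  (forall (a : R) (u v : X), f (a *: u + v) = a * f u + f v) /\ continuous f.

Definition topology_on (D : set X) (tau : set (set X)) : Prop :=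
  [/\ (forall U, tau U -> U `<=` D), tau set0, tau D,
      (forall F : set (set X), F `<=` tau -> tau (\bigcup_(U in F) U)) &
      (forall U V, tau U -> tau V -> tau (U `&` V))].

Definition loc_convex_top (tau : set (set X)) : Prop :=
  forall U x, tau U -> U x -> exists V, [/\ tau V, cvx V, V x & V `<=` U].

(* tau contains the relative weak topology of D: it suffices (tau being a
   topology) that tau contains the subbasic sets D /\ f^-1(W) *)
Definition contains_rel_weak (D : set X) (tau : set (set X)) : Prop :=
  forall f : X -> R, cont_lin_functional f ->
    forall W : set R, open W -> tau (D `&` f @^-1` W).

Definition rel_open (tau : set (set X)) (C : set X) (O : set X) : Prop :=
  exists U, tau U /\ O = U `&` C.

Definition simplexS (n : nat) (l : 'I_n -> R) : Prop :=
  (forall i, 0 <= l i) /\ \sum_(i < n) l i = 1.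

Definition minksum (n : nat) (l : 'I_n -> R) (O : 'I_n -> set X) : set X :=
  [set z | exists y : 'I_n -> X, (forall i, O i (y i)) /\ z = \sum_(i < n) l i *: y i].

Definition setdiam (A : set X) : \bar R :=
  ereal_sup [set (`|a - b|)%:E | a in A & b in A].

Definition setdist (A B : set X) : \bar R :=
  ereal_inf [set (`|a - b|)%:E | a in A & b in B].

End Defs.

(* Main.v *)
Require Import Defs.
From HB Require Import structures.
From mathcomp Require Import all_boot all_order all_algebra.
From mathcomp Require Import all_classical all_reals all_analysis.
From mathcomp Require Import lra ring.
Set Implicit Arguments. Unset Strict Implicit. Unset Printing Implicit Defensive.
Import Order.TTheory GRing.Theory Num.Theory.
Import numFieldNormedType.Exports.
Local Open Scope classical_set_scope.
Local Open Scope ring_scope.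
Section HB.
Context {R : realType} {X : normedModType R}.

Definition linc (G : set (X * R)) := forall p q (c : R), G p -> G q ->
  G (c *: p.1 + q.1, c * p.2 + q.2).
Definition domn (G : set (X * R)) := forall p, G p -> p.2 <= `|p.1|.

Lemma hb (v : X) : exists f : X -> R,
  [/\ forall (a : R) u w, f (a *: u + w) = a * f u + f w,
      forall u, `|f u| <= `|u| & f v = `|v|].
Proof.
pose P (G : set (X * R)) := [/\ linc G, domn G & (G !=set0 -> G (v, `|v|))].
have [A [[linA domA vA] maxA]] : exists A, P A /\ forall B, A `<` B -> ~ P B.
  apply: Zorn_bigcup => F FP Ftot; split.
  - move=> p q c [G1 FG1 G1p] [G2 FG2 G2q].
    have [G12|G21] := Ftot _ _ FG1 FG2.
    + exists G2 => //; have [l _ _] := FP _ FG2; exact: l (G12 _ G1p) G2q.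
    + exists G1 => //; have [l _ _] := FP _ FG1; exact: l G1p (G21 _ G2q).
  - by move=> p [G FG Gp]; have [_ d _] := FP _ FG; exact: d.
  - move=> [p [G FG Gp]]; exists G => //; have [_ _ h] := FP _ FG; apply: h.
    by exists p.
pose B0 := [set p : X * R | exists t : R, p = (t *: v, t * `|v|)].
have B0P : P B0.
  split.
  - move=> p q c [t ->] [s ->]; exists (c * t + s) => /=.
    by rewrite scalerDl scalerA mulrDl mulrA.
  - move=> p [t ->] /=; rewrite normrZ; apply: ler_wpM2r => //; exact: ler_norm.
  - by move=> _; exists 1; rewrite scale1r mul1r.
have Ane : A !=set0.
  apply: contrapT => nA; apply: (maxA B0 _ B0P).
  have -> : A = set0 by apply/seteqP; split => // p Ap; apply: nA; exists p.
  split; first exact: sub0set.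
  by move=> /(_ (v, `|v|)) h; apply: h; exists 1; rewrite scale1r mul1r.
have Av := vA Ane.
have A00 : A (0, 0).
  by have := linA _ _ (-1) Av Av; rewrite /= scaleN1r addNr mulN1r addNr.
have uniq u a b : A (u, a) -> A (u, b) -> a = b.
  move=> Ha Hb; have H1 := domA _ (linA _ _ (-1) Ha Hb).
  have H2 := domA _ (linA _ _ (-1) Hb Ha).
  move: H1 H2; rewrite /= scaleN1r addNr normr0 !mulN1r => H1 H2.
  lra.
have tot u : exists a, A (u, a).
  apply/not_existsP => nu.
  pose E := [set r | exists w b, A (w, b) /\ r = b - `|w - u|].
  have E0 : E !=set0 by exists (0 - `|0 - u|), 0, 0.
  have Eub : ubound E `|u|.
    move=> _ [w [b [Awb ->]]]; have := domA _ Awb => /= Hb.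
    have : `|w| <= `|w - u| + `|u| by rewrite -{1}(subrK u w) ler_normD.
    lra.
  have Esup : has_sup E by split => //; exists `|u|.
  pose c := sup E.
  have key w b : A (w, b) -> c <= `|w + u| - b.
    move=> Awb; apply: ge_sup => // _ [w' [b' [Awb' ->]]].
    have := domA _ (linA _ _ 1 Awb Awb'); rewrite /= scale1r mul1r => H.
    have : `|w + w'| <= `|w + u| + `|w' - u|.
      have -> : w + w' = (w + u) + (w' - u) by rewrite addrACA subrr addr0.
      exact: ler_normD.
    lra.
  have low w b : A (w, b) -> b - `|w - u| <= c.
    by move=> Awb; apply: sup_upper_bound => //; exists w, b.
  pose B := [set p | exists w b t, A (w, b) /\ p = (w + t *: u, b + t * c)].
  apply: (maxA B); last first.
    split.
    - move=> p q k [w1 [b1 [t1 [A1 ->]]]] [w2 [b2 [t2 [A2 ->]]]].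
      exists (k *: w1 + w2), (k * b1 + b2), (k * t1 + t2); split.
        exact: (linA (w1, b1) (w2, b2) k A1 A2).
      congr (_, _) => /=.
        by rewrite scalerDr scalerA scalerDl addrACA.
      by rewrite mulrDr mulrA mulrDl addrACA.
    - move=> p [w [b [t [Awb ->]]]] /=.
      have [t0|t0|->] := ltgtP t 0; last first.
      + by rewrite scale0r addr0 mul0r addr0; exact: (domA _ Awb).
      + have := key _ _ (linA _ _ (t^-1) Awb A00).
        rewrite /= addr0 addr0 => H.
        have := ler_wpM2l (ltW t0) H.
        rewrite mulrBr mulrA mulfV ?gt_eqF // mul1r.
        move=> H'.
        rewrite -[w + t *: u](_ : t *: (t^-1 *: w + u) = _); last first.
          by rewrite scalerDr scalerA mulfV ?gt_eqF // scale1r.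
        rewrite normrZ gtr0_norm //; lra.
      + have s0 : 0 < - t by rewrite oppr_gt0.
        have := low _ _ (linA _ _ ((- t)^-1) Awb A00).
        rewrite /= addr0 addr0 => H.
        have := ler_wpM2l (ltW s0) H.
        rewrite mulrBr mulrA mulfV ?gt_eqF // mul1r => H'.
        rewrite -[w + t *: u](_ : (- t) *: ((- t)^-1 *: w - u) = _); last first.
          by rewrite scalerDr scalerA mulfV ?gt_eqF // scale1r scalerN scaleNr opprK.
        rewrite normrZ gtr0_norm //; lra.
    - move=> _; exists v, `|v|, 0; split => //.
      by rewrite scale0r addr0 mul0r addr0.
  split.
    move=> [w b] Awb; exists w, b, 0; split => //.
    by rewrite scale0r addr0 mul0r addr0.
  move=> /(_ (u, c)) h; apply: (nu c); apply: h.
  exists 0, 0, 1; split => //.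
  by rewrite scale1r add0r mul1r add0r.
pose f u := sval (cid (tot u)).
have Af u : A (u, f u) by rewrite /f; case: cid.
exists f; split.
- by move=> a u w; apply: uniq (Af _) _; exact: linA (Af u) (Af w).
- move=> u; rewrite ler_norml; apply/andP; split; last exact: (domA _ (Af u)).
  have := linA _ _ (-1) (Af u) A00; rewrite /= scaleN1r addr0 mulN1r addr0 => Hn.
  have e := uniq _ _ _ (Af (- u)) Hn.
  have := domA _ (Af (- u)); rewrite /= e normrN; lra.
- exact: uniq (Af v) Av.
Qed.

Lemma lipcont (f : X -> R) : (forall u w, `|f u - f w| <= `|u - w|) -> continuous f.
Proof.
move=> H x; apply/cvgrPdist_lt => e e0.
near=> y.
apply: (le_lt_trans (H _ _)).
near: y.
have := @cvgr_dist_lt _ _ _ (nbhs x) _ id x cvg_id e e0. exact.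
Unshelve. all: by end_near.
Qed.

Lemma hb2 (v : X) : exists f : X -> R,
  [/\ cont_lin_functional f, forall u, `|f u| <= `|u|, f v = `|v|,
      forall u w, f (u - w) = f u - f w &
      forall n (l : 'I_n -> R) (u : 'I_n -> X), f (\sum_(i < n) l i *: u i) = \sum_(i < n) l i * f (u i)].
Proof.
have [f [lin bd fv]] := hb v.
have f0 : f 0 = 0 by have := lin 1 0 0; rewrite scale1r addr0 mul1r; lra.
have fN u : f (- u) = - f u by have := lin (-1) u 0; rewrite scaleN1r addr0 f0 addr0 mulN1r.
have fB u w : f (u - w) = f u - f w.
  have -> : u - w = 1 *: u + (- w) by rewrite scale1r.
  by rewrite lin mul1r fN.
exists f; split => //.
- split => //; apply: lipcont => u w; rewrite -fB; exact: bd.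
- move=> n l u; apply: (big_ind2 (fun a b => f a = b)) => //.
    move=> x1 x2 y1 y2 <- <-.
    have -> : x1 + y1 = 1 *: x1 + y1 by rewrite scale1r.
    by rewrite lin mul1r.
  by move=> i _; rewrite -[_ *: _]addr0 lin f0 addr0.
Qed.

End HB.

Section Main.
Context {R : realType} {X : normedModType R}.
Variables (D : set X) (tau : set (set X)) (C : set X) (Mp : R).
Hypotheses (topD : topology_on D tau) (wD : contains_rel_weak D tau) (CD : C `<=` D)
  (Mp0 : 0 <= Mp) (MD : forall u, D u -> `|u| <= Mp).

Definition Qp n (l : 'I_n -> R) (y : X) (d : R) (O : 'I_n -> set X) :=
  forall s s', minksum l O s -> minksum l O s' -> `|s - y| <= `|s' - y| + d.

Lemma sum_bound n (l : 'I_n -> R) (r : R) (u : 'I_n -> X) :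
  (forall i, `|l i| <= r) -> (forall i, D (u i)) ->
  `|\sum_(i < n) l i *: u i| <= n%:R * r * Mp.
Proof.
move=> lr Du; apply: (le_trans (ler_norm_sum _ _ _)).
have -> : n%:R * r * Mp = \sum_(i < n) (r * Mp) by rewrite sumr_const card_ord -mulrA mulr_natl.
apply: ler_sum => i _; rewrite normrZ; apply: ler_pM => //; exact: MD.
Qed.

Lemma step n (O : 'I_n -> set X) (l : 'I_n -> R) (y : X) (d : R) :
  0 < d -> (forall i, `|l i| <= 1) ->
  (forall i, rel_open tau C (O i)) -> (forall i, O i !=set0) ->
  exists O' : 'I_n -> set X, [/\ forall i, rel_open tau C (O' i),
     forall i, O' i !=set0, forall i, O' i `<=` O i & Qp l y d O'].
Proof.
move=> d0 l1 Oop One.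
have /choice [y0 Hy0] : forall i, exists z, O i z by move=> i; have [z] := One i; exists z.
pose V := [set `|s - y| | s in minksum l O].
have V0 : V !=set0 by exists `|\sum_(i < n) l i *: y0 i - y|; exists (\sum_(i < n) l i *: y0 i) => //; exists y0.
have OD i z : O i z -> D z by move=> Oz; have [U [_ E]] := Oop i; apply: CD; move: Oz; rewrite E => -[].
have Vub : ubound V (n%:R * 1 * Mp + `|y|).
  move=> _ [s [u [Ou ->]] <-].
  apply: (le_trans (ler_normB _ _)); rewrite lerD2r.
  apply: sum_bound => // i; exact: OD (Ou i).
have Vsup : has_sup V by split => //; exists (n%:R * 1 * Mp + `|y|).
pose Ms := sup V.
have [_ [s0 [y1 [Oy1 ->]] <-] Hs0] := sup_adherent (divr_gt0 d0 (ltr0n _ 2)) Vsup.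
have [f [flin fb fv fB fS]] := hb2 (\sum_(i < n) l i *: y1 i - y).
pose rho := d / 2 / (n%:R + 1).
have rho0 : 0 < rho by rewrite divr_gt0 ?divr_gt0 // ltr_wpDl.
exists (fun i => O i `&` [set u | `|f u - f (y1 i)| < rho]); split.
- move=> i; have [U [tU E]] := Oop i.
  exists (U `&` (D `&` f @^-1` ball (f (y1 i)) rho)); split.
    case: topD => _ _ _ _ I; apply: I => //; apply: wD => //; exact: ball_open.
  rewrite E; apply/seteqP; split => z /=.
    move=> [[Uz Cz] fz]; split => //; split => //; split; first exact: CD.
    by rewrite -ball_normE /ball_ /= distrC.
  move=> [[Uz [_ fz]] Cz]; split => //; move: fz.
  by rewrite -ball_normE /ball_ /= distrC.
- by move=> i; exists (y1 i); split; [exact: Oy1 | rewrite /= subrr normr0].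
- by move=> i z [].
move=> s s' [u [Ou ->]] [u' [Ou' ->]].
have Ms1 : `|\sum_(i < n) l i *: u i - y| <= Ms.
  by apply: sup_upper_bound => //; exists (\sum_(i < n) l i *: u i) => //; exists u; split => // i; case: (Ou i).
have key : f (\sum_(i < n) l i *: y1 i) - d / 2 <= f (\sum_(i < n) l i *: u' i).
  rewrite !fS.
  suff : `|\sum_(i < n) l i * f (u' i) - \sum_(i < n) l i * f (y1 i)| <= d / 2.
    by rewrite ler_norml => /andP [B1 B2]; lra.
  rewrite -sumrB; apply: (le_trans (ler_norm_sum _ _ _)).
  apply: (@le_trans _ _ (\sum_(i < n) rho)).
    apply: ler_sum => i _; rewrite -mulrBr normrM.
    apply: (le_trans (ler_wpM2r _ (l1 i))) => //; rewrite mul1r.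
    by have [_ /ltW] := Ou' i.
  rewrite sumr_const card_ord -[rho *+ n]mulr_natl /rho mulrA [n%:R * _]mulrC -mulrA.
  apply: ler_piMr; first by rewrite divr_ge0 // ltW.
  by rewrite ler_pdivrMr ?ltr_wpDl // mul1r lerDl.
have f2 : f (\sum_(i < n) l i *: u' i - y) <= `|\sum_(i < n) l i *: u' i - y|.
  exact: le_trans (ler_norm _) (fb _).
move: f2; rewrite fB => f2.
move: fv; rewrite fB => fv. rewrite /Ms in Ms1.
lra.
Qed.

Lemma Qp_mono n (l : 'I_n -> R) y d (O O' : 'I_n -> set X) :
  (forall i, O' i `<=` O i) -> Qp l y d O -> Qp l y d O'.
Proof.
move=> sub Q s s' [u [Ou ->]] [u' [Ou' ->]]; apply: Q.
  by exists u; split => // i; apply: sub.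
by exists u'; split => // i; apply: sub.
Qed.

Lemma iterQ n (Ot : 'I_n -> set X) d (T : eqType) (lam : T -> 'I_n -> R) (pt : T -> X)
  (L : seq T) :
  0 < d -> (forall t i, `|lam t i| <= 1) -> (forall i, rel_open tau C (Ot i)) ->
  (forall i, Ot i !=set0) ->
  exists O : 'I_n -> set X, [/\ forall i, rel_open tau C (O i), forall i, O i !=set0,
    forall i, O i `<=` Ot i & forall t, t \in L -> Qp (lam t) (pt t) d O].
Proof.
move=> d0 l1 Oo One; elim: L => [|t L IH].
  by exists Ot; split; [done|done|move=> i z|move=> t; rewrite in_nil].
have [Ob [Oo' One' sub QL]] := IH.
have [Oc [Oo'' One'' sub' Q']] := step (pt t) d0 (l1 t) Oo' One'.
exists Oc; split => //.
  by move=> i z /sub' /sub.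
move=> t'; rewrite inE => /orP [/eqP -> //|tL].
exact: Qp_mono sub' (QL _ tL).
Qed.

Lemma core n k (x : 'I_k -> X) (O : 'I_n -> set X) (eps : R) (N : nat) :
  0 < eps -> (0 < N)%N -> n%:R * N%:R^-1 * Mp <= eps / 8 ->
  (forall i z, O i z -> D z) ->
  (forall (m : {ffun 'I_n -> 'I_N.+1}) j, Qp (fun i => (m i)%:R / N%:R) (x j) (eps / 4) O) ->
  forall l, simplexS l ->
  (setdiam (minksum l O) <= 2%:E * setdist (range x) (minksum l O) + eps%:E)%E.
Proof.
move=> e0 N0 Nb OD Q l [l0 lsum].
have N0' : 0 < N%:R :> R by rewrite ltr0n.
have l1 i : l i <= 1.
  rewrite -lsum (bigD1 i) //= lerDl; exact: sumr_ge0.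
have tle i : (Num.truncn (l i * N%:R) < N.+1)%N.
  rewrite ltnS -(ler_nat R); apply: le_trans (_ : l i * N%:R <= N%:R).
    by rewrite truncn_le mulr_ge0.
  by rewrite ler_piMl.
pose m : {ffun 'I_n -> 'I_N.+1} := [ffun i => inord (Num.truncn (l i * N%:R))].
pose lam i := (m i)%:R / N%:R :> R.
have lamE i : lam i = (Num.truncn (l i * N%:R))%:R / N%:R by rewrite /lam ffunE inordK.
have dl i : `|l i - lam i| <= N%:R^-1.
  rewrite lamE; have /andP [h1 h2] := truncn_itv (mulr_ge0 (l0 i) (ler0n _ N)).
  have -> : l i - (Num.truncn (l i * N%:R))%:R / N%:R = (l i * N%:R - (Num.truncn (l i * N%:R))%:R) / N%:R.
    by rewrite mulrBl mulfK ?gt_eqF.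
  rewrite normrM ger0_norm ?subr_ge0 // ger0_norm ?invr_ge0 ?ler0n //.
  rewrite ler_pdivrMr // mulVf ?gt_eqF //; move: h2; rewrite -natr1; lra.
have close w : (forall i, O i (w i)) ->
    `|\sum_(i < n) l i *: w i - \sum_(i < n) lam i *: w i| <= eps / 8.
  move=> Ow; rewrite -sumrB.
  have -> : \sum_(i < n) (l i *: w i - lam i *: w i) = \sum_(i < n) (l i - lam i) *: w i.
    by apply: eq_bigr => i _; rewrite scalerBl.
  apply: le_trans Nb; apply: sum_bound => // i; exact: OD (Ow i).
have inS w : (forall i, O i (w i)) -> minksum lam O (\sum_(i < n) lam i *: w i).
  by move=> Ow; exists w.
have real a b s j : minksum l O a -> minksum l O b -> minksum l O s ->
    `|a - b| <= 2 * `|x j - s| + eps.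
  move=> [u [Ou ->]] [v [Ov ->]] [w [Ow ->]].
  have Qj := Q m j; rewrite /Qp -/lam in Qj.
  have h1 := Qj _ _ (inS _ Ou) (inS _ Ow).
  have h2 := Qj _ _ (inS _ Ov) (inS _ Ow).
  have c1 := close _ Ou; have c2 := close _ Ov; have c3 := close _ Ow.
  set A := \sum_(i < n) l i *: u i in c1 *; set A' := \sum_(i < n) lam i *: u i in h1 c1 *.
  set B := \sum_(i < n) l i *: v i in c2 *; set B' := \sum_(i < n) lam i *: v i in h2 c2 *.
  set S := \sum_(i < n) l i *: w i in c3 *; set S' := \sum_(i < n) lam i *: w i in h1 h2 c3 *.
  have t1 := ler_distD A' A B.
  have t2 := ler_distD (x j) A' B.
  have t3 := ler_distD B' (x j) B.
  have t4 := ler_distD S (S' ) (x j).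
  have e1 : `|x j - B'| = `|B' - x j| by rewrite distrC.
  have e2 : `|B' - B| = `|B - B'| by rewrite distrC.
  have e3 : `|S' - S| = `|S - S'| by rewrite distrC.
  have e4 : `|S - x j| = `|x j - S| by rewrite distrC.
  lra.
rewrite /setdiam; apply: ge_ereal_sup => _ [a Sa [b Sb <-]].
have H : (((`|a - b| - eps) / 2)%:E <= setdist (range x) (minksum l O))%E.
  apply: le_ereal_inf_tmp => _ [_ [j _ <-] [s Ss <-]].
  rewrite lee_fin; have := real a b s j Sa Sb Ss; lra.
apply: le_trans (leeD2r _ (lee_wpmul2l _ H)) => //.
by rewrite -EFinM -EFinD lee_fin; lra.
Qed.

End Main.

Theorem lemma2p5 (R : realType) (X : completeNormedModType R)
  (D : set X) (tau : set (set X)) (C : set X) (eps : R) (n k : nat)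
  (x : 'I_k -> X) (Ot : 'I_n -> set X) :
  closed D -> nbounded D -> cvx D ->
  topology_on D tau -> loc_convex_top tau -> contains_rel_weak D tau ->
  C `<=` D -> cvx C -> 0 < eps ->
  (forall i, rel_open tau C (Ot i) /\ Ot i !=set0) ->
  exists O : 'I_n -> set X,
    [/\ (forall i, rel_open tau C (O i)), (forall i, O i !=set0),
        (forall i, O i `<=` Ot i) &
        (forall l : 'I_n -> R, simplexS l ->
           (setdiam (minksum l O) <= 2%:E * setdist (range x) (minksum l O) + eps%:E)%E)].
Proof.
move=> _ [M MD] _ topD _ wD CD _ e0 HOt.
pose Mp := `|M|.
have MD' u : D u -> `|u| <= Mp by move=> Du; exact: le_trans (MD u Du) (ler_norm M).
pose N := (Num.truncn (8 * n%:R * Mp / eps)).+1.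
have N0 : (0 < N)%N by [].
have Nb : n%:R * N%:R^-1 * Mp <= eps / 8.
  have h := truncnS_gt (8 * n%:R * Mp / eps); rewrite -/N in h.
  rewrite mulrAC ler_pdivrMr ?ltr0n //.
  have -> : n%:R * Mp = eps / 8 * (8 * n%:R * Mp / eps).
    by field; rewrite gt_eqF.
  by apply: ler_wpM2l; [rewrite divr_ge0 // ltW | exact: ltW].
have lb : forall (t : ({ffun 'I_n -> 'I_N.+1} * 'I_k)%type) (i : 'I_n),
    `|(t.1 i)%:R / N%:R| <= 1 :> R.
  move=> t i; rewrite ger0_norm ?divr_ge0 ?ler0n //.
  by rewrite ler_pdivrMr ?ltr0n // mul1r ler_nat -ltnS.
have [Ob [Oo One sub QL]] := @iterQ R X D tau C Mp topD wD CD MD' n Ot (eps / 4)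
  ({ffun 'I_n -> 'I_N.+1} * 'I_k)%type (fun t i => (t.1 i)%:R / N%:R) (fun t => x t.2)
  (enum (@predT ({ffun 'I_n -> 'I_N.+1} * 'I_k)%type))
  (divr_gt0 e0 (ltr0n _ 4)) lb (fun i => (HOt i).1) (fun i => (HOt i).2).
exists Ob; split => //.
apply: (@core R X D Mp MD' n k x Ob eps N e0 N0 Nb).
  move=> i z; have [U [_ ->]] := Oo i; move=> [_ Cz]; exact: CD.
by move=> m j; apply: (QL (m, j)); rewrite mem_enum.
Qed.
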